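(* Let $E$ be a separable Banach space over $K$ and let $X=(X_1,\dots,X_n)$ be a vector of independent, identically distributed, $E$-valued $K$-Gaussian random variables. Let $\{\alpha_1,\dots,\alpha_m\}$ be an orthogonal set in $K^n$, where $\alpha_j=(\alpha_{j,1},\dots,\alpha_{j,n})$, and let $A$ be the $n\times m$ matrix whose $j$-th column is $\alpha_j$. Then $Y=XA$, i.e. $Y_j=\sum_{i=1}^n\alpha_{j,i}X_i$ for $1\le j\le m$, is a vector of independent $K$-Gaussian random variables.
   Context: $K$ is a local field (locally compact, non-discrete, totally disconnected topological field) with its non-archimedean absolute value $|\cdot|$ ($|x|=0\iff x=0$, $|xy|=|x||y|$, $|x+y|\le|x|\vee|y|$). A normed space over $K$ is a $K$-vector space with $\|\cdot\|$ satisfying $\|x\|=0\iff x=0$, $\|\alpha x\|=|\alpha|\|x\|$, $\|x+y\|\le\|x\|\vee\|y\|$; a Banach space if complete. $K^n$ has norm $|(x_1,\dots,x_n)|=|x_1|\vee\dots\vee|x_n|$. A subset $F$ of a normed space is orthogonal if $\|\sum_{i=1}^k\beta_ix_i\|=\bigvee_{i=1}^k|\beta_i|\|x_i\|$ for all finite $\{x_1,\dots,x_k\}\subset F$ and $\beta_i\in K$; orthonormal if moreover each element has norm $1$. For a separable Banach space $E$ over $K$, an $E$-valued random variable $X$ is $K$-Gaussian if whenever $X_1,X_2$ are independent copies of $X$ and $(\alpha_{11},\alpha_{12}),(\alpha_{21},\alpha_{22})$ is an orthonormal pair in $K^2$, $(\alpha_{11}X_1+\alpha_{12}X_2,\alpha_{21}X_1+\alpha_{22}X_2)$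 has the same law as $(X_1,X_2)$. *)

(* Defs.v *)
From HB Require Import structures.
From mathcomp Require Import all_boot all_order all_algebra.
From mathcomp Require Import all_classical all_reals all_analysis.
Set Implicit Arguments. Unset Strict Implicit. Unset Printing Implicit Defensive.
Import Order.TTheory GRing.Theory Num.Theory.
Local Open Scope classical_set_scope.
Local Open Scope ring_scope.

Section Defs.
Variable R : realType.

Definition nonarch_abs (K : fieldType) (absK : K -> R) : Prop :=
  [/\ forall x, 0 <= absK x,
      forall x, absK x = 0 <-> x = 0,
      forall x y, absK (x * y) = absK x * absK y &
      forall x y, absK (x + y) <= Num.max (absK x) (absK y)].

(** Compactness of a
    closed ball is written as sequential compactness (equivalent in metric
    spaces).  Total disconnectedness is automatic for an ultrametric
    topology. *)
Definition local_field (K : fieldType) (absK : K -> R) : Prop :=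
  [/\ nonarch_abs absK,
      (forall e : R, 0 < e -> exists x : K, x != 0 /\ absK x < e) &
      (forall x0 : K, exists r : R, 0 < r /\
         forall u : nat -> K, (forall k, absK (u k - x0) <= r) ->
         exists (phi : nat -> nat) (l : K),
           (forall k, (phi k < phi k.+1)%N) /\ absK (l - x0) <= r /\
           forall e : R, 0 < e -> exists N, forall k, (N <= k)%N ->
             absK (u (phi k) - l) < e)].

Definition is_norm (K : fieldType) (absK : K -> R) (E : lmodType K)
  (nE : E -> R) : Prop :=
  [/\ forall x, nE x = 0 <-> x = 0,
      forall (a : K) x, nE (a *: x) = absK a * nE x &
      forall x y, nE (x + y) <= Num.max (nE x) (nE y)].

Definition complete_norm (K : fieldType) (E : lmodType K) (nE : E -> R) :=
  forall u : nat -> E,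
    (forall e : R, 0 < e -> exists N, forall p q, (N <= p)%N -> (N <= q)%N ->
        nE (u p - u q) < e) ->
    exists l : E, forall e : R, 0 < e -> exists N, forall p, (N <= p)%N ->
        nE (u p - l) < e.

Definition separable_norm (K : fieldType) (E : lmodType K) (nE : E -> R) :=
  exists d : nat -> E, forall (x : E) (e : R), 0 < e -> exists k, nE (x - d k) < e.

Definition sep_banach (K : fieldType) (absK : K -> R) (E : lmodType K)
  (nE : E -> R) : Prop :=
  [/\ is_norm absK nE, complete_norm nE & separable_norm nE].

Definition nopen (T : zmodType) (nE : T -> R) (A : set T) : Prop :=
  forall x, A x -> exists e : R, 0 < e /\ forall y, nE (y - x) < e -> A y.

Definition borel (T : zmodType) (nE : T -> R) : set (set T) :=
  <<s [set A | nopen nE A] >>.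

Definition borel2 (T : zmodType) (nE : T -> R) : set (set (T * T)) :=
  <<s [set B1 `*` B2 | B1 in borel nE & B2 in borel nE] >>.

Definition rv (T : zmodType) (nE : T -> R) d (Omega : measurableType d)
  (X : Omega -> T) : Prop :=
  forall B, borel nE B -> measurable (X @^-1` B).

Definition indep (T : zmodType) (nE : T -> R) d (Omega : measurableType d)
  (P : probability Omega R) (I : finType) (X : I -> Omega -> T) : Prop :=
  forall B : I -> set T, (forall i, borel nE (B i)) ->
    P (\bigcap_(i in [set: I]) (X i @^-1` B i)) =
      (\prod_(i : I) P (X i @^-1` B i))%E.

Definition vnorm (K : fieldType) (absK : K -> R) (n : nat) (x : 'I_n -> K) : R :=
  \big[Num.max/0]_(i < n) absK (x i).

Definition K_orthogonal (K : fieldType) (absK : K -> R) (n m : nat)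
  (alpha : 'I_m -> 'I_n -> K) : Prop :=
  forall beta : 'I_m -> K,
    vnorm absK (fun i => \sum_(j < m) beta j * alpha j i) =
    \big[Num.max/0]_(j < m) (absK (beta j) * vnorm absK (alpha j)).

Definition K_orthonormal (K : fieldType) (absK : K -> R) (n m : nat)
  (alpha : 'I_m -> 'I_n -> K) : Prop :=
  K_orthogonal absK alpha /\ forall j, vnorm absK (alpha j) = 1.

Definition K_gaussian (K : fieldType) (absK : K -> R) (E : lmodType K)
  (nE : E -> R) d (Omega : measurableType d) (P : probability Omega R)
  (X : Omega -> E) : Prop :=
  rv nE X /\
  forall d' (Omega' : measurableType d') (P' : probability Omega' R)
         (X1 X2 : Omega' -> E),
    rv nE X1 -> rv nE X2 ->
    indep nE P' (fun i : 'I_2 => if val i == 0%N then X1 else X2) ->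
    (forall B, borel nE B -> P' (X1 @^-1` B) = P (X @^-1` B)) ->
    (forall B, borel nE B -> P' (X2 @^-1` B) = P (X @^-1` B)) ->
    forall a : 'I_2 -> 'I_2 -> K, K_orthonormal absK a ->
    forall C, borel2 nE C ->
      P' ((fun w => (a 0 0 *: X1 w + a 0 1 *: X2 w,
                     a 1 0 *: X1 w + a 1 1 *: X2 w)) @^-1` C) =
      P' ((fun w => (X1 w, X2 w)) @^-1` C).

End Defs.

(* Main.v *)
Require Import Defs.
From HB Require Import structures.
From mathcomp Require Import all_boot all_order all_algebra.
From mathcomp Require Import all_classical all_reals all_analysis.
From mathcomp Require Import ring lra.
Set Implicit Arguments. Unset Strict Implicit. Unset Printing Implicit Defensive.
Import Order.TTheory GRing.Theory Num.Theory.
Local Open Scope classical_set_scope.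
Local Open Scope ring_scope.

Section AbsFacts.
Context (R : realType) (K : fieldType) (absK : K -> R) (hK : nonarch_abs absK).

Lemma absK_ge0 x : 0 <= absK x. Proof. by case: hK. Qed.
Lemma absK_eq0 x : absK x = 0 <-> x = 0. Proof. by case: hK. Qed.
Lemma absKM x y : absK (x * y) = absK x * absK y. Proof. by case: hK. Qed.
Lemma absKD x y : absK (x + y) <= Num.max (absK x) (absK y). Proof. by case: hK. Qed.
Lemma absK0 : absK 0 = 0. Proof. exact/absK_eq0. Qed.
Lemma absK1 : absK 1 = 1.
Proof.
have h := absKM 1 1; rewrite mulr1 in h.
have n0 : absK 1 != 0 by apply/eqP => /absK_eq0 /eqP; rewrite oner_eq0.
by apply: (mulfI n0); rewrite -h mulr1.
Qed.
Lemma absKN1 : absK (-1) = 1.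
Proof.
have h := absKM (-1) (-1); rewrite mulrNN mulr1 absK1 in h.
have := absK_ge0 (-1); move: h; set a := absK (-1) => h a0.
have : (a - 1) * (a + 1) = 0 by rewrite mulrBl !mulrDr !mulr1 mul1r -h; ring.
move/eqP; rewrite mulf_eq0 => /orP[]; first by rewrite subr_eq0 => /eqP.
move=> /eqP e; have : a = -1 by rewrite -(subr0 a) -e; ring.
by move=> ea; move: a0; rewrite ea ler0N1.
Qed.
Lemma absKN x : absK (- x) = absK x.
Proof. by rewrite -mulN1r absKM absKN1 mul1r. Qed.
Lemma absKB x y : absK (x - y) <= Num.max (absK x) (absK y).
Proof. by rewrite -(absKN y) absKD. Qed.
End AbsFacts.
Section VN.
Context (R : realType) (K : fieldType) (absK : K -> R) (hK : nonarch_abs absK).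
Local Notation vn := (vnorm absK).

Lemma vnorm_ge n (a : 'I_n -> K) i : absK (a i) <= vn a.
Proof. exact: le_bigmax. Qed.

Lemma vnorm_ge0 n (a : 'I_n -> K) : 0 <= vn a.
Proof.
rewrite /vnorm; elim/big_ind: _ => //= [x y hx hy|i _].
  by rewrite le_max hx.
exact: (absK_ge0 hK).
Qed.

Lemma vnorm_le n (a : 'I_n -> K) c : 0 <= c -> (forall i, absK (a i) <= c) -> vn a <= c.
Proof. by move=> c0 h; apply: bigmax_le. Qed.

Definition tv n (l k : 'I_n) (r : K) (a : 'I_n -> K) : 'I_n -> K :=
  fun i => if i == l then a l - r * a k else a i.

Inductive gen n : (('I_n -> K) -> ('I_n -> K)) -> Prop :=
| gen_id : gen id
| gen_step T l k r : gen T -> l != k -> absK r <= 1 -> gen (tv l k r \o T).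

Lemma gen_comp n (T2 T1 : ('I_n -> K) -> ('I_n -> K)) : gen T2 -> gen T1 -> gen (T2 \o T1).
Proof.
elim=> [|T l k r gT IH lk r1] g1; first exact: g1.
exact: (gen_step (IH g1) lk r1).
Qed.

Definition linT n (T : ('I_n -> K) -> ('I_n -> K)) :=
  forall m (b : 'I_m -> K) (al : 'I_m -> 'I_n -> K),
    T (fun i => \sum_(j < m) b j * al j i) = fun i => \sum_(j < m) b j * T (al j) i.

Definition isoT n (T : ('I_n -> K) -> ('I_n -> K)) := forall a, vn (T a) = vn a.

Lemma tv_lin n (l k : 'I_n) r : linT (tv l k r).
Proof.
move=> m b al; apply: funext => i; rewrite /tv; case: eqP => // _.
rewrite mulr_sumr -sumrB; apply: eq_bigr => j _; ring.
Qed.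

Lemma tv_le n (l k : 'I_n) r a : absK r <= 1 -> vn (tv l k r a) <= vn a.
Proof.
move=> r1; apply: vnorm_le; first exact: vnorm_ge0.
move=> i; rewrite /tv; case: eqP => _; last exact: vnorm_ge.
apply: le_trans (absKB hK _ _) _; rewrite ge_max vnorm_ge /=.
rewrite (absKM hK); apply: le_trans (vnorm_ge a k).
by rewrite -[X in _ <= X]mul1r ler_wpM2r // (absK_ge0 hK).
Qed.

Lemma tv_inv n (l k : 'I_n) r a : l != k -> tv l k (- r) (tv l k r a) = a.
Proof.
move=> lk; apply: funext => i; rewrite /tv; case: eqP => [->|//].
rewrite eqxx eq_sym (negbTE lk); ring.
Qed.

Lemma tv_iso n (l k : 'I_n) r : l != k -> absK r <= 1 -> isoT (tv l k r).
Proof.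
move=> lk r1 a; apply/eqP; rewrite eq_le tv_le //=.
rewrite -{1}(tv_inv r a lk); apply: tv_le.
by rewrite (absKN hK).
Qed.

Lemma gen_lin n T : @gen n T -> linT T.
Proof.
elim=> [|T' l k r gT IH lk r1]; first by [].
by move=> m b al /=; rewrite IH tv_lin.
Qed.

Lemma gen_iso n T : @gen n T -> isoT T.
Proof.
elim=> [|T' l k r gT IH lk r1] a //=.
by rewrite (tv_iso lk r1) IH.
Qed.

Lemma orth_transport n m T (al : 'I_m -> 'I_n -> K) :
  linT T -> isoT T -> K_orthogonal absK al -> K_orthogonal absK (fun j => T (al j)).
Proof.
move=> lT iT oal b; rewrite -lT iT oal.
by apply: eq_bigr => j _; rewrite iT.
Qed.

End VN.
Section Reduce.
Context (R : realType) (K : fieldType) (absK : K -> R) (hK : nonarch_abs absK).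
Local Notation vn := (vnorm absK).

Definition e_vec n (k : 'I_n) (c : K) : 'I_n -> K := fun i => if i == k then c else 0.

Definition shape n m (s : 'I_m -> option 'I_n) (c : 'I_m -> K) (be : 'I_m -> 'I_n -> K) :=
  [/\ forall j, be j = match s j with Some k => e_vec k (c j) | None => fun _ => 0 end,
      forall j k, s j = Some k -> c j != 0 &
      forall j j' k, s j = Some k -> s j' = Some k -> j = j'].

Lemma unlift_widen m (j : 'I_m) : unlift ord_max (widen_ord (leqnSn m) j) = Some j.
Proof.
have -> : widen_ord (leqnSn m) j = lift ord_max j by apply: val_inj; rewrite [RHS]lift_max.
exact: liftK.
Qed.

Lemma split_last m (j : 'I_m.+1) :
  j = ord_max \/ exists j', j = widen_ord (leqnSn m) j'.
Proof.
case: (unliftP ord_max j) => [j' ->|->]; last by left.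
right; exists j'; apply: val_inj; rewrite [LHS]lift_max.
by [].
Qed.

Lemma fold_tv n (L : seq 'I_n) (k : 'I_n) (r : 'I_n -> K) a :
  uniq L -> k \notin L ->
  (foldr (fun l T => tv l k (r l) \o T) id L) a =
  fun i => if i \in L then a i - r i * a k else a i.
Proof.
elim: L => [|l L IH] /=; first by move=> _ _; apply: funext => i.
move=> /andP[lL uL]; rewrite inE negb_or => /andP[kl kL].
rewrite IH //; apply: funext => i; rewrite /tv inE.
rewrite (negbTE lL) (negbTE kL).
by case: (eqVneq i l) => [->|] //=.
Qed.

Lemma fold_gen n (L : seq 'I_n) (k : 'I_n) (r : 'I_n -> K) :
  (forall l, l \in L -> l != k) -> (forall l, absK (r l) <= 1) ->
  gen absK (foldr (fun l T => tv l k (r l) \o T) id L).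
Proof.
elim: L => [|l L IH] /= hL hr; first exact: gen_id.
apply: gen_step => //; last by apply: hL; rewrite inE eqxx.
apply: IH => // l' h; apply: hL; by rewrite inE h orbT.
Qed.

Lemma absKV x : x != 0 -> absK (x^-1) = (absK x)^-1.
Proof.
move=> x0; have h := absKM hK x x^-1; rewrite mulfV // (absK1 hK) in h.
have ax : absK x != 0 by apply/eqP => /(absK_eq0 hK) /eqP; rewrite (negbTE x0).
by apply: (mulfI ax); rewrite -h mulfV.
Qed.

Lemma orth_prefix n m (al : 'I_m.+1 -> 'I_n -> K) :
  K_orthogonal absK al -> K_orthogonal absK (fun j : 'I_m => al (widen_ord (leqnSn m) j)).
Proof.
move=> oal b.
pose b' (j : 'I_m.+1) := match unlift ord_max j with Some j' => b j' | None => 0 end.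
have e1 : (fun i => \sum_(j < m) b j * al (widen_ord (leqnSn m) j) i) =
          (fun i => \sum_(j < m.+1) b' j * al j i).
  apply: funext => i; rewrite big_ord_recr /= /b' unlift_none mul0r addr0.
  by apply: eq_bigr => j _; rewrite unlift_widen.
rewrite e1 oal.
have h0 k (F : 'I_k -> R) : (forall j, 0 <= F j) -> 0 <= \big[Num.max/0]_(j < k) F j.
  by move=> hF; elim/big_ind: _ => //= x y hx hy; rewrite le_max hx.
have hF k (al' : 'I_k -> 'I_n -> K) (c : 'I_k -> K) j : 0 <= absK (c j) * vn (al' j).
  by rewrite mulr_ge0 ?(absK_ge0 hK) ?vnorm_ge0.
apply/eqP; rewrite eq_le; apply/andP; split.
  apply: bigmax_le; first by apply: h0 => j; rewrite mulr_ge0 ?(absK_ge0 hK) ?vnorm_ge0.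
  move=> j _; case: (split_last j) => [->|[j' ->]].
    by rewrite /b' unlift_none (absK0 hK) mul0r; apply: h0 => j0; rewrite mulr_ge0 ?(absK_ge0 hK) ?vnorm_ge0.
  rewrite /b' unlift_widen.
  exact: (le_bigmax _ (fun j => absK (b j) * vn (al (widen_ord (leqnSn m) j))) j').
apply: bigmax_le; first by apply: h0 => j; rewrite mulr_ge0 ?(absK_ge0 hK) ?vnorm_ge0.
move=> j _; apply: le_trans (le_bigmax _ _ (widen_ord (leqnSn m) j)).
by rewrite /b' unlift_widen.
Qed.

Lemma reduce n m (al : 'I_m -> 'I_n -> K) : K_orthogonal absK al ->
  exists T, gen absK T /\ exists s c, shape s c (fun j => T (al j)).
Proof.
elim: m al => [|m IH] al oal.
  exists id; split; first exact: gen_id.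
  by exists (fun _ => None), (fun _ => 0); split; case.
have [T1 [gT1 [s1 [c1 [hsh1 hc1 hinj1]]]]] := IH _ (orth_prefix oal).
pose be := fun j => T1 (al j).
have obe : K_orthogonal absK be := orth_transport (gen_lin gT1) (gen_iso hK gT1) oal.
pose v := be ord_max.
pose piv := fun i => [exists j, s1 j == Some i].
pose w := fun i => if piv i then 0 else v i.
have hbe j : be (widen_ord (leqnSn m) j) =
    match s1 j with Some k => e_vec k (c1 j) | None => fun _ => 0 end := hsh1 j.
have vw : vn v <= vn w.
  pose b (j : 'I_m.+1) := match unlift ord_max j with
     Some j' => (match s1 j' with Some k => - v k / c1 j' | None => 0 end) | None => 1 end.
  have ew : (fun i => \sum_(j < m.+1) b j * be j i) = w.
    apply: funext => i; rewrite big_ord_recr /= {2}/b unlift_none mul1r.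
    have ht j : b (widen_ord (leqnSn m) j) * be (widen_ord (leqnSn m) j) i
              = if s1 j == Some i then - v i else 0.
      rewrite /b unlift_widen hbe; case E: (s1 j) => [k|]; last by rewrite mul0r.
      rewrite /e_vec; case: (eqVneq i k) => [->|ik]; first by rewrite eqxx divfK // (hc1 _ _ E).
      rewrite mulr0; have -> : (Some k == Some i) = (k == i) by [].
      by rewrite eq_sym (negbTE ik).
    rewrite (eq_bigr _ (fun j _ => ht j)) /w.
    case: ifP => pi.
      have [j0 /eqP e0] := existsP pi.
      rewrite (bigD1 j0) //= e0 eqxx big1 ?addr0 ?addNr // => j nj.
      case: eqP => // ej; move: nj; by rewrite (hinj1 _ _ _ ej e0) eqxx.
    rewrite big1 ?add0r // => j _; case: eqP => // ej.
    by move: pi; have -> : piv i by apply/existsP; exists j; rewrite ej.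
  have := obe b; rewrite ew => ->.
  apply: le_trans (le_bigmax _ _ ord_max).
  by rewrite /b unlift_none (absK1 hK) mul1r.
have [[i1 /andP[ni1 vi1]] | hno] := pselect (exists i, ~~ piv i && (v i != 0)).
  have [k nk kmax] : exists2 k, ~~ piv k & forall j, ~~ piv j -> absK (v j) <= absK (v k).
    by case: (@arg_maxP _ _ _ i1 (fun i => ~~ piv i) (fun i => absK (v i)) ni1) => k; exists k.
  have vk l : absK (v l) <= absK (v k).
    apply: le_trans (@vnorm_ge _ _ absK _ v l) _; apply: le_trans vw _.
    apply: vnorm_le => [|i]; first exact: (absK_ge0 hK).
    rewrite /w; case: ifP => p; first by rewrite (absK0 hK) (absK_ge0 hK).
    by apply: kmax; rewrite p.
  have vk0 : v k != 0.
    apply/eqP => e; have := vk i1; rewrite e (absK0 hK) => h.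
    have : absK (v i1) = 0 by apply/eqP; rewrite eq_le h (absK_ge0 hK).
    by move/(absK_eq0 hK) => e1; move: vi1; rewrite e1 eqxx.
  pose L := [seq l <- enum 'I_n | l != k].
  pose r := fun l => v l / v k.
  pose T2 := foldr (fun l T => tv l k (r l) \o T) id L.
  have uL : uniq L by rewrite filter_uniq ?enum_uniq.
  have kL : k \notin L by rewrite mem_filter eqxx.
  have inL i : (i \in L) = (i != k) by rewrite mem_filter mem_enum andbT.
  have hr l : absK (r l) <= 1.
    have kpos : 0 < absK (v k).
      rewrite lt_def (absK_ge0 hK) andbT; apply/eqP => /(absK_eq0 hK) e.
      by move: vk0; rewrite e eqxx.
    by rewrite /r (absKM hK) (absKV vk0) ler_pdivrMr // mul1r.
  have gT2 : gen absK T2 by apply: fold_gen => // l; rewrite inL.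
  have T2e a : T2 a = fun i => if i != k then a i - r i * a k else a i.
    by rewrite /T2 fold_tv //; apply: funext => i; rewrite inL.
  exists (T2 \o T1); split; first exact: gen_comp.
  exists (fun j => match unlift ord_max j with Some j' => s1 j' | None => Some k end).
  exists (fun j => match unlift ord_max j with Some j' => c1 j' | None => v k end).
  split.
  - move=> j; case: (split_last j) => [->|[j' ->]]; rewrite ?unlift_none ?unlift_widen.
      change (T2 v = e_vec k (v k)); rewrite T2e; apply: funext => i.
      rewrite /e_vec /r; case: (eqVneq i k) => [->|ik] //=.
      by rewrite divfK // subrr.
    change (T2 (be (widen_ord (leqnSn m) j')) = match s1 j' with
             Some k0 => e_vec k0 (c1 j') | None => fun _ => 0 end).
    rewrite hbe T2e; case E: (s1 j') => [k'|]; apply: funext => i; last first.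
      by case: ifP => _; rewrite ?mulr0 ?subr0.
    have pk' : piv k' by apply/existsP; exists j'; rewrite E.
    have kk' : k != k' by apply/eqP => e; move: nk; rewrite e pk'.
    have ek : e_vec k' (c1 j') k = 0 by rewrite /e_vec (negbTE kk').
    by case: ifP => _; rewrite ?ek ?mulr0 ?subr0.
  - move=> j k0; case: (split_last j) => [->|[j' ->]]; rewrite ?unlift_none ?unlift_widen //.
    exact: hc1.
  - move=> j j' k0; case: (split_last j) => [->|[j1 ->]]; case: (split_last j') => [->|[j2 ->]];
      rewrite ?unlift_none ?unlift_widen //.
    + move=> [<-] E; move: nk; have -> // : piv k by apply/existsP; exists j2; rewrite E.
    + move=> E [ek]; move: nk; have -> // : piv k by apply/existsP; exists j1; rewrite E ek.
    + by move=> E1 E2; rewrite (hinj1 _ _ _ E1 E2).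
have v0 i : v i = 0.
  apply/(absK_eq0 hK)/eqP; rewrite eq_le (absK_ge0 hK) andbT.
  apply: le_trans (@vnorm_ge _ _ absK _ v i) _; apply: le_trans vw _.
  apply: vnorm_le => // i'; rewrite /w; case: ifP => p; first by rewrite (absK0 hK).
  case: (eqVneq (v i') 0) => [->|nz]; first by rewrite (absK0 hK).
  by exfalso; apply: hno; exists i'; rewrite p nz.
exists T1; split => //.
exists (fun j => match unlift ord_max j with Some j' => s1 j' | None => None end).
exists (fun j => match unlift ord_max j with Some j' => c1 j' | None => 0 end).
split.
- move=> j; case: (split_last j) => [->|[j' ->]]; rewrite ?unlift_none ?unlift_widen.
    by change (v = fun _ => 0); apply: funext => i; rewrite v0.
  exact: hsh1.
- move=> j k0; case: (split_last j) => [->|[j' ->]]; rewrite ?unlift_none ?unlift_widen //.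
  exact: hc1.
- move=> j j' k0; case: (split_last j) => [->|[j1 ->]]; case: (split_last j') => [->|[j2 ->]];
    rewrite ?unlift_none ?unlift_widen //.
  by move=> E1 E2; rewrite (hinj1 _ _ _ E1 E2).
Qed.

End Reduce.
Lemma small_inv (R : realType) (e : R) : 0 < e -> exists q : nat, (q.+1%:R)^-1 < e.
Proof.
move=> e0; exists (Num.bound e^-1).
rewrite invf_plt ?ltr0Sn ?posrE ?ltr0Sn //.
apply: lt_trans (archi_boundP _) _; first by rewrite invr_ge0 ltW.
by rewrite ltr_nat.
Qed.

Section SA.
Context (T : Type) (S : set (set T)) (saS : sigma_algebra setT S).
Lemma sa0 : S set0. Proof. by case: saS. Qed.
Lemma saC A : S A -> S (~` A). Proof. by case: saS => _ h _ /h; rewrite setTD. Qed.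
Lemma saU (F : (set T)^nat) : (forall k, S (F k)) -> S (\bigcup_k F k). Proof. by case: saS => _ _; apply. Qed.
Lemma saT : S setT. Proof. by rewrite -setC0; apply: saC; apply: sa0. Qed.
Lemma saU2 A B : S A -> S B -> S (A `|` B).
Proof. by move=> hA hB; rewrite -bigcup2E; apply: saU => -[|[|k]] //=; apply: sa0. Qed.
Lemma saI A B : S A -> S B -> S (A `&` B).
Proof. by move=> hA hB; rewrite -[A `&` B]setCK setCI; apply/saC/saU2; apply: saC. Qed.
End SA.

Section Meas.
Context (R : realType) (K : fieldType) (absK : K -> R) (hK : nonarch_abs absK)
  (E : lmodType K) (nE : E -> R) (hE : sep_banach absK nE).

Lemma nE_eq0 x : nE x = 0 <-> x = 0. Proof. by case: hE => -[]. Qed.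
Lemma nEZ a x : nE (a *: x) = absK a * nE x. Proof. by case: hE => -[]. Qed.
Lemma nED x y : nE (x + y) <= Num.max (nE x) (nE y). Proof. by case: hE => -[]. Qed.
Lemma nE0 : nE 0 = 0. Proof. exact/nE_eq0. Qed.
Lemma nEN x : nE (- x) = nE x. Proof. by rewrite -scaleN1r nEZ (absKN1 hK) mul1r. Qed.
Lemma nE_ge0 x : 0 <= nE x.
Proof. have := nED x (- x); rewrite subrr nE0 nEN. by rewrite maxxx. Qed.
Lemma nE_sym x y : nE (x - y) = nE (y - x). Proof. by rewrite -nEN opprB. Qed.
Lemma nEB x y : nE (x - y) <= Num.max (nE x) (nE y). Proof. by rewrite -(nEN y) nED. Qed.

Definition rvS (T : Type) (S : set (set T)) (U : T -> E) :=
  forall B, borel nE B -> S (U @^-1` B).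

Lemma sa_preimage (T : Type) (S : set (set T)) (U : T -> E) : sigma_algebra setT S ->
  sigma_algebra setT [set B | S (U @^-1` B)].
Proof.
move=> saS; split => /=.
- by rewrite preimage_set0; apply: sa0.
- by move=> A hA; rewrite setTD -preimage_setC; apply: saC.
- by move=> F hF; rewrite preimage_bigcup; apply: saU.
Qed.

Lemma rvS_of_open (T : Type) (S : set (set T)) (U : T -> E) : sigma_algebra setT S ->
  (forall O, nopen nE O -> S (U @^-1` O)) -> rvS S U.
Proof.
move=> saS hO B hB.
exact: (smallest_sub (sa_preimage U saS) hO hB).
Qed.

Definition nball (x : E) (r : R) := [set y | nE (y - x) < r].

Lemma nopen_ball x r : nopen nE (nball x r).
Proof.
move=> y hy; exists r; split; first by apply: le_lt_trans hy; apply: nE_ge0.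
move=> z hz; rewrite /nball /=.
have -> : z - x = (z - y) + (y - x) by rewrite addrA subrK.
by apply: le_lt_trans (nED _ _) _; rewrite gt_max hz.
Qed.

Lemma borel_open O : nopen nE O -> borel nE O.
Proof. by move=> h; apply: sub_gen_smallest. Qed.

Lemma borelT : borel nE setT.
Proof. exact: (saT (smallest_sigma_algebra _ _)). Qed.

Lemma borel_ball x r : borel nE (nball x r).
Proof. by apply: borel_open; apply: nopen_ball. Qed.

Lemma rvS_comb (T : Type) (S : set (set T)) (U V : T -> E) (s t : K) :
  sigma_algebra setT S -> rvS S U -> rvS S V ->
  rvS S (fun w => s *: U w + t *: V w).
Proof.
move=> saS hU hV; apply: rvS_of_open => // O hO.
case: hE => _ _ [d hd].
pose bl x (q : nat) := nball x (q.+1%:R)^-1.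
pose F p r q := if `[< forall x y, bl (d p) q x -> bl (d r) q y -> O (s *: x + t *: y) >]
   then U @^-1` (bl (d p) q) `&` V @^-1` (bl (d r) q) else set0.
have -> : (fun w => s *: U w + t *: V w) @^-1` O =
    \bigcup_p \bigcup_r \bigcup_q F p r q.
  apply/seteqP; split => w /=.
    move=> hw; have [e [e0 he]] := hO _ hw.
    pose M := Num.max (absK s) (absK t) + 1.
    have M0 : 0 < M by rewrite /M ltr_wpDl // le_max (absK_ge0 hK).
    have [q hq] := small_inv (divr_gt0 e0 M0).
    have q0 : 0 < (q.+1%:R : R)^-1 by rewrite invr_gt0 ltr0Sn.
    have [p hp] := hd (U w) _ q0.
    have [r hr] := hd (V w) _ q0.
    exists p => //; exists r => //; exists q => //.
    rewrite /F; case: ifPn => [_|/asboolPn []]; first by split.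
    move=> x y hx hy; apply: he.
    have -> : s *: x + t *: y - (s *: U w + t *: V w) = s *: (x - U w) + t *: (y - V w).
      by rewrite !scalerBr addrACA opprD.
    have hx' : nE (x - U w) < (q.+1%:R)^-1.
      have -> : x - U w = (x - d p) + (d p - U w) by rewrite addrA subrK.
      by apply: le_lt_trans (nED _ _) _; rewrite gt_max hx nE_sym hp.
    have hy' : nE (y - V w) < (q.+1%:R)^-1.
      have -> : y - V w = (y - d r) + (d r - V w) by rewrite addrA subrK.
      by apply: le_lt_trans (nED _ _) _; rewrite gt_max hy nE_sym hr.
    have key (a : K) z : absK a <= M - 1 -> nE z < (q.+1%:R)^-1 -> nE (a *: z) < e.
      move=> ha hz; rewrite nEZ.
      apply: (@le_lt_trans _ _ (M * nE z)).
        by apply: ler_wpM2r; [apply: nE_ge0| apply: le_trans ha _; rewrite lerBlDr lerDl].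
      by move: (lt_trans hz hq); rewrite ltr_pdivlMr // mulrC.
    apply: le_lt_trans (nED _ _) _; rewrite gt_max !key //.
      by rewrite /M addrK le_max lexx orbT.
    by rewrite /M addrK le_max lexx.
  move=> [p _ [r _ [q _]]]; rewrite /F; case: ifPn => [/asboolP h [hu hv]|//].
  exact: h.
apply: saU => // p; apply: saU => // r; apply: saU => // q.
rewrite /F; case: ifPn => _; last exact: sa0.
by apply: saI => //; [apply: hU | apply: hV]; apply: borel_ball.
Qed.

End Meas.
Lemma big_opt (V : Type) (idx : V) (op : Monoid.com_law idx) (I J : finType)
  (f : J -> option I) (G : I -> V) :
  (forall j j' i, f j = Some i -> f j' = Some i -> j = j') ->
  (forall i, (forall j, f j <> Some i) -> G i = idx) ->
  \big[op/idx]_j (match f j with Some i => G i | None => idx end) = \big[op/idx]_i G i.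
Proof.
move=> inj hG.
transitivity (\big[op/idx]_j \big[op/idx]_i (if f j == Some i then G i else idx)).
  apply: eq_bigr => j _; case E: (f j) => [i0|]; last by rewrite big1.
  rewrite (bigD1 i0) //= eqxx big1 ?Monoid.mulm1 // => i ni.
  by have -> : (Some i0 == Some i) = (i0 == i) by []; rewrite eq_sym (negbTE ni).
rewrite exchange_big; apply: eq_bigr => i _.
case: (pselect (exists j, f j = Some i)) => [[j0 e0]|hn].
  rewrite (bigD1 j0) /= ?e0 ?eqxx // big1 ?Monoid.mulm1 // => j nj.
  case: eqP => // ej; by move: nj; rewrite (inj _ _ _ ej e0) eqxx.
have -> : G i = idx by apply: hG => j ej; apply: hn; exists j.
apply: big1 => j _; case: eqP => // ej; exfalso; apply: hn; exists j.
Qed.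

Section Indep.
Context (R : realType) (K : fieldType) (absK : K -> R) (hK : nonarch_abs absK)
  (E : lmodType K) (nE : E -> R) (hE : sep_banach absK nE).

Lemma indep_opt d (Omega : measurableType d) (P : probability Omega R) (I J : finType)
  (X : I -> Omega -> E) (Y : J -> Omega -> E) (f : J -> option I) :
  indep nE P X -> (forall j j' i, f j = Some i -> f j' = Some i -> j = j') ->
  (forall j B, borel nE B -> match f j with
     | Some i => exists D, borel nE D /\ Y j @^-1` B = X i @^-1` D
     | None => Y j @^-1` B = setT \/ Y j @^-1` B = set0 end) ->
  indep nE P Y.
Proof.
move=> hX inj hY B hB.
have hD j : exists D, borel nE D /\ (forall i, f j = Some i -> Y j @^-1` B j = X i @^-1` D).
  have := hY j (B j) (hB j); case: (f j) => [i [D [hD e]]|_].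
    by exists D; split => // i' [<-].
  by exists setT; split => //; apply: borelT.
have [D hD'] := choice hD.
case: (pselect (exists j, f j = None /\ Y j @^-1` B j = set0)) => [[j [fj e]]|hno].
  have -> : \bigcap_(i in [set: J]) (Y i @^-1` B i) = set0.
    by apply/seteqP; split => // w hw; rewrite -e; apply: hw.
  by rewrite measure0 (bigD1 j) //= e measure0 mul0e.
have hN j : f j = None -> Y j @^-1` B j = setT.
  move=> fj; have := hY j (B j) (hB j); rewrite fj => -[//|e].
  by exfalso; apply: hno; exists j.
pose B' i := match [pick j | f j == Some i] with Some j => D j | None => setT end.
have hB' i : borel nE (B' i).
  by rewrite /B'; case: pickP => [j _|_]; [exact: (hD' j).1 | exact: borelT].
have eB' j i : f j = Some i -> B' i = D j.
  move=> fj; rewrite /B'; case: pickP => [j' /eqP fj'|h].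
    by rewrite (inj _ _ _ fj' fj).
  by have := h j; rewrite fj eqxx.
have -> : \bigcap_(j in [set: J]) (Y j @^-1` B j) = \bigcap_(i in [set: I]) (X i @^-1` B' i).
  apply/seteqP; split => w hw i _.
    rewrite /B'; case: pickP => [j /eqP fj|_] //.
    by have := hw j Logic.I; rewrite ((hD' j).2 i fj).
  case Ef: (f i) => [i'|]; last by rewrite hN.
  by rewrite ((hD' i).2 i' Ef) -(eB' _ _ Ef); apply: (hw i' Logic.I).
rewrite hX //; apply/esym.
transitivity (\prod_(j : J) (match f j with Some i => P (X i @^-1` B' i) | None => 1 end))%E.
  apply: eq_bigr => j _; case Ef: (f j) => [i|].
    by rewrite ((hD' j).2 i Ef) (eB' _ _ Ef).
  by rewrite hN // probability_setT.
apply: big_opt => // i hi; rewrite /B'; case: pickP => [j /eqP fj|_].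
  by exfalso; apply: (hi j).
by rewrite preimage_setT probability_setT.
Qed.

End Indep.
Section Gauss.
Context (R : realType) (K : fieldType) (absK : K -> R) (hK : nonarch_abs absK)
  (E : lmodType K) (nE : E -> R) (hE : sep_banach absK nE).

Lemma sa_pre (T T' : Type) (S : set (set T)) (U : T -> T') : sigma_algebra setT S ->
  sigma_algebra setT [set B | S (U @^-1` B)].
Proof.
move=> saS; split => /=.
- by rewrite preimage_set0; apply: sa0.
- by move=> A hA; rewrite setTD -preimage_setC; apply: saC.
- by move=> F hF; rewrite preimage_bigcup; apply: saU.
Qed.

Lemma rvS2 (T : Type) (S : set (set T)) (f : T -> E * E) : sigma_algebra setT S ->
  (forall B1 B2, borel nE B1 -> borel nE B2 -> S (f @^-1` (B1 `*` B2))) ->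
  forall C, borel2 nE C -> S (f @^-1` C).
Proof.
move=> saS h C hC; apply: (smallest_sub (sa_pre f saS) _ hC).
by move=> _ [B1 hB1 [B2 hB2 <-]]; apply: h.
Qed.

Lemma rvS_pair (T : Type) (S : set (set T)) (U V : T -> E) : sigma_algebra setT S ->
  rvS nE S U -> rvS nE S V ->
  forall C, borel2 nE C -> S ((fun w => (U w, V w)) @^-1` C).
Proof.
move=> saS hU hV; apply: rvS2 => // B1 B2 h1 h2.
exact: (saI saS (hU _ h1) (hV _ h2)).
Qed.

Lemma rvS_ext (T : Type) (S : set (set T)) (U V : T -> E) :
  (forall w, U w = V w) -> rvS nE S U -> rvS nE S V.
Proof. by move=> e; have -> : V = U by apply: funext => w; rewrite e. Qed.

Lemma rvS_scale (T : Type) (S : set (set T)) (U : T -> E) (c : K) :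
  sigma_algebra setT S -> rvS nE S U -> rvS nE S (fun w => c *: U w).
Proof.
move=> saS hU; apply: (@rvS_ext _ _ (fun w => c *: U w + 0 *: U w)).
  by move=> w; rewrite scale0r addr0.
exact: (rvS_comb hK hE).
Qed.

Lemma rvS_add (T : Type) (S : set (set T)) (U V : T -> E) (s : K) :
  sigma_algebra setT S -> rvS nE S U -> rvS nE S V -> rvS nE S (fun w => U w + s *: V w).
Proof.
move=> saS hU hV; apply: (@rvS_ext _ _ (fun w => 1 *: U w + s *: V w)).
  by move=> w; rewrite scale1r.
exact: (rvS_comb hK hE).
Qed.

Lemma borel_sa : sigma_algebra setT (borel nE).
Proof. exact: smallest_sigma_algebra. Qed.

Lemma borel2_sa : sigma_algebra setT (borel2 nE).
Proof. exact: smallest_sigma_algebra. Qed.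

Lemma borel_scale (c : K) B : borel nE B -> borel nE ((fun x => c *: x) @^-1` B).
Proof.
move=> hB; apply: (rvS_scale (U := id) c borel_sa) => //.
Qed.

Lemma rv_meas d (Omega : measurableType d) (U : Omega -> E) :
  rv nE U -> rvS nE (@measurable _ Omega) U.
Proof. by []. Qed.

Lemma kg_law d (Omega : measurableType d) (P : probability Omega R) (X Y : Omega -> E) :
  K_gaussian absK nE P X -> rv nE Y ->
  (forall B, borel nE B -> P (Y @^-1` B) = P (X @^-1` B)) -> K_gaussian absK nE P Y.
Proof.
move=> [_ hX] hY hl; split => // d' O' P' X1 X2 h1 h2 hi l1 l2.
apply: hX => // B hB; [rewrite l1 | rewrite l2] => //; exact: hl.
Qed.

Lemma rv_const d (Omega : measurableType d) (x : E) : rv nE (fun _ : Omega => x).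
Proof.
move=> B hB; case: (pselect (B x)) => h.
  have -> : (fun _ : Omega => x) @^-1` B = setT by apply/seteqP; split.
  exact: measurableT.
have -> : (fun _ : Omega => x) @^-1` B = set0 by apply/seteqP; split => // w.
exact: measurable0.
Qed.

Lemma borel_nz : borel nE (~` [set 0]).
Proof.
apply: borel_open => x hx; exists (nE x); split.
  rewrite lt_def (nE_ge0 hK hE) andbT; apply/eqP => /(nE_eq0 hE) e; exact: hx e.
move=> y hy y0; move: hy; rewrite y0 sub0r (nEN hK hE) ltxx.
by [].
Qed.

Lemma kg_zero d (Omega : measurableType d) (P : probability Omega R) :
  K_gaussian absK nE P (fun _ : Omega => 0).
Proof.
split; first exact: rv_const.
move=> d' O' P' X1 X2 h1 h2 hi l1 l2 a ha C hC.
pose N1 := X1 @^-1` (~` [set 0]); pose N2 := X2 @^-1` (~` [set 0]).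
have e1 : P' N1 = 0%E.
  rewrite /N1 l1; last exact: borel_nz.
  rewrite (_ : _ @^-1` _ = set0) ?measure0 //; apply/seteqP; split => [w0 /= h|//]; exact: h.
have e2 : P' N2 = 0%E.
  rewrite /N2 l2; last exact: borel_nz.
  rewrite (_ : _ @^-1` _ = set0) ?measure0 //; apply/seteqP; split => [w0 /= h|//]; exact: h.
have mN1 : measurable N1 by apply: h1; apply: borel_nz.
have mN2 : measurable N2 by apply: h2; apply: borel_nz.
pose G := ~` (N1 `|` N2).
have mG : measurable G by apply: measurableC; apply: measurableU.
have eN : P' (N1 `|` N2) = 0%E.
  apply/eqP; rewrite eq_le measure_ge0 andbT.
  apply: le_trans (measureU2 _ mN1 mN2) _; rewrite /= e1 e2 adde0 //.
have key A : measurable A -> P' A = P' (A `&` G).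
  move=> mA; rewrite (measureDI P' mA mG).
  rewrite (@subset_measure0 _ _ _ P' (A `\` G) (N1 `|` N2)) ?add0e //.
  - exact: measurableD.
  - exact: measurableU.
  - by move=> w [_ hw]; apply: contrapT.
have sa := @sigma_algebra_measurable _ O'.
have mA1 : measurable ((fun w => (a 0 0 *: X1 w + a 0 1 *: X2 w,
                                  a 1 0 *: X1 w + a 1 1 *: X2 w)) @^-1` C).
  by apply: rvS_pair => //; apply: (rvS_comb hK hE).
have mA2 : measurable ((fun w => (X1 w, X2 w)) @^-1` C) by apply: rvS_pair.
rewrite (key _ mA1) (key _ mA2); congr (P' _).
apply/seteqP; split => w [hw hG]; split => //.
  have z1 : X1 w = 0 by apply: contrapT => h; apply: hG; left.
  have z2 : X2 w = 0 by apply: contrapT => h; apply: hG; right.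
  by move: hw; rewrite /= z1 z2 !scaler0 !addr0.
have z1 : X1 w = 0 by apply: contrapT => h; apply: hG; left.
have z2 : X2 w = 0 by apply: contrapT => h; apply: hG; right.
by move: hw; rewrite /= z1 z2 !scaler0 !addr0.
Qed.

Lemma sc_simpl (c a b : K) (z z' : E) : c != 0 ->
  c *: (a *: (c^-1 *: z) + b *: (c^-1 *: z')) = a *: z + b *: z'.
Proof.
move=> c0; rewrite scalerDr !scalerA.
have h (x : K) : c * x * c^-1 = x by rewrite mulrAC mulfV // mul1r.
by rewrite !h.
Qed.

Lemma kg_scale d (Omega : measurableType d) (P : probability Omega R) (X : Omega -> E) (c : K) :
  c != 0 -> K_gaussian absK nE P X -> K_gaussian absK nE P (fun w => c *: X w).
Proof.
move=> c0 [hX hG]; split.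
  exact: (rvS_scale c (@sigma_algebra_measurable _ Omega) hX).
move=> d' O' P' Z1 Z2 h1 h2 hi l1 l2 a ha C hC.
have sa := @sigma_algebra_measurable _ O'.
pose W1 := fun w => c^-1 *: Z1 w; pose W2 := fun w => c^-1 *: Z2 w.
have r1 : rv nE W1 := rvS_scale _ sa h1.
have r2 : rv nE W2 := rvS_scale _ sa h2.
have iW : indep nE P' (fun i : 'I_2 => if val i == 0%N then W1 else W2).
  apply: (indep_opt (X := fun i : 'I_2 => if val i == 0%N then Z1 else Z2) (f := Some) hi).
    by move=> j j' i [->] [->].
  move=> j B hB /=; exists ((fun x => c^-1 *: x) @^-1` B); split; first exact: borel_scale.
  by case: ifP.
have lW (Z : O' -> E) : (forall B, borel nE B -> P' (Z @^-1` B) = P ((fun w => c *: X w) @^-1` B)) ->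
    forall B, borel nE B -> P' ((fun w => c^-1 *: Z w) @^-1` B) = P (X @^-1` B).
  move=> lZ B hB.
  change (P' (Z @^-1` ((fun x => c^-1 *: x) @^-1` B)) = P (X @^-1` B)).
  rewrite lZ; last exact: borel_scale.
  congr (P _); apply/seteqP; split => w /=; by rewrite scalerA mulVf // scale1r.
pose g := fun p : E * E => (c *: p.1, c *: p.2).
have hC' : borel2 nE (g @^-1` C).
  apply: (rvS2 borel2_sa) => // B1 B2 hB1 hB2; apply: sub_gen_smallest.
  exists ((fun x => c *: x) @^-1` B1); first exact: borel_scale.
  by exists ((fun x => c *: x) @^-1` B2); first exact: borel_scale.
have := hG d' O' P' W1 W2 r1 r2 iW (lW _ l1) (lW _ l2) a ha _ hC'.
have -> : (fun w => (a 0 0 *: W1 w + a 0 1 *: W2 w, a 1 0 *: W1 w + a 1 1 *: W2 w)) @^-1` (g @^-1` C)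
   = (fun w => (a 0 0 *: Z1 w + a 0 1 *: Z2 w, a 1 0 *: Z1 w + a 1 1 *: Z2 w)) @^-1` C.
  by apply/seteqP; split => w /=; rewrite /g /= !sc_simpl.
have -> : (fun w => (W1 w, W2 w)) @^-1` (g @^-1` C) = (fun w => (Z1 w, Z2 w)) @^-1` C.
  by apply/seteqP; split => w /=; rewrite /g /W1 /W2 /= !scalerA !mulfV // !scale1r.
by [].
Qed.

End Gauss.
Section TV.
Context (R : realType) (K : fieldType) (absK : K -> R) (hK : nonarch_abs absK)
  (E : lmodType K) (nE : E -> R) (hE : sep_banach absK nE).

Definition tmat (s : K) : 'I_2 -> 'I_2 -> K := fun j i =>
  if val j == 0%N then (if val i == 0%N then 1 else 0) else (if val i == 0%N then s else 1).

Lemma bigmax2 (F : 'I_2 -> R) : (forall i, 0 <= F i) ->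
  \big[Num.max/0]_(i < 2) F i = Num.max (F ord0) (F ord_max).
Proof.
move=> h0; apply/eqP; rewrite eq_le; apply/andP; split.
  apply: bigmax_le => [|i _]; first by rewrite le_max h0.
  have [e|e] : i = ord0 \/ i = ord_max.
    by case: i => [[|[|]]] // p; [left|right]; apply: val_inj.
  by rewrite e le_max lexx.
  by rewrite e le_max lexx orbT.
by rewrite ge_max !le_bigmax.
Qed.

Lemma sum2 (F : 'I_2 -> K) : \sum_(i < 2) F i = F ord0 + F ord_max.
Proof.
rewrite big_ord_recl big_ord1; congr (_ + F _); exact: val_inj.
Qed.

Lemma ultra_strict x y : absK y < absK x -> absK (x + y) = absK x.
Proof.
move=> h; apply/eqP; rewrite eq_le; apply/andP; split.
  apply: le_trans (absKD hK _ _) _; rewrite ge_max lexx /=; exact: ltW.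
have : absK x <= Num.max (absK (x + y)) (absK y).
  by have := absKB hK (x + y) y; rewrite addrK.
rewrite le_max => /orP[//|]; by rewrite leNgt h.
Qed.

Lemma tmat_on s : absK s <= 1 -> K_orthonormal absK (tmat s).
Proof.
move=> s1.
have v0 : vnorm absK (tmat s ord0) = 1.
  rewrite /vnorm bigmax2 => [|i]; last exact: (absK_ge0 hK).
  by rewrite /tmat /= (absK1 hK) (absK0 hK) max_l // ler01.
have v1 : vnorm absK (tmat s ord_max) = 1.
  rewrite /vnorm bigmax2 => [|i]; last exact: (absK_ge0 hK).
  by rewrite /tmat /= (absK1 hK) max_r.
split; last first.
  move=> j; have [e|e] : j = ord0 \/ j = ord_max.
    by case: j => [[|[|]]] // p; [left|right]; apply: val_inj.
  by rewrite e.
  by rewrite e.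
move=> b.
rewrite /vnorm bigmax2 => [|i]; last exact: (absK_ge0 hK).
rewrite bigmax2 => [|i]; last by rewrite mulr_ge0 ?(absK_ge0 hK) ?vnorm_ge0.
rewrite -/(vnorm absK (tmat s ord0)) -/(vnorm absK (tmat s ord_max)) v0 v1 !mulr1.
rewrite !sum2 /tmat /= !mulr1 !mulr0 add0r.
have hs : absK (b ord_max * s) <= absK (b ord_max).
  by rewrite (absKM hK) -[X in _ <= X]mulr1 ler_wpM2l // (absK_ge0 hK).
have [h|h] := lerP (absK (b ord0)) (absK (b ord_max)).
  have l1 : absK (b ord0 + b ord_max * s) <= absK (b ord_max).
    apply: le_trans (absKD hK _ _) _.
    by rewrite ge_max h hs.
  by apply/max_idPr.
rewrite ultra_strict; last exact: le_lt_trans hs h.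
by apply/max_idPl; apply: ltW.
Qed.

End TV.
Section TV2.
Context (R : realType) (K : fieldType) (absK : K -> R) (hK : nonarch_abs absK)
  (E : lmodType K) (nE : E -> R) (hE : sep_banach absK nE).

Lemma prod_split2 (I : finType) (F : I -> \bar R) (i k : I) : i != k ->
  (\prod_(l : I) F l = F i * F k * \prod_(l | (l != i) && (l != k)) F l)%E.
Proof.
move=> ik; rewrite (bigD1 i) // (bigD1 k) /=; last by rewrite eq_sym.
rewrite muleA; congr (_ * _)%E; apply: eq_bigl => l; by rewrite andTb.
Qed.

Lemma cap_split (T : Type) (I : finType) (Y : I -> T -> E) (F : I -> set E) (i k : I) :
  \bigcap_(l in [set: I]) (Y l @^-1` F l) =
  (Y i @^-1` F i `&` Y k @^-1` F k) `&`
  \bigcap_(l in [set: I]) (Y l @^-1` (if (l == i) || (l == k) then setT else F l)).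
Proof.
apply/seteqP; split => w.
  move=> hw; split; first by split; [apply: (hw i) | apply: (hw k)].
  by move=> l _; case: ifP => _ //; apply: (hw l).
move=> [[hi hk] hw] l _; case: (eqVneq l i) => [->//|li]; case: (eqVneq l k) => [->//|lk].
by have := hw l Logic.I; rewrite (negbTE li) (negbTE lk).
Qed.

Lemma cap_setT (T : Type) (I : finType) (Y : I -> T -> E) (F : I -> set E) :
  (forall l, F l = setT) -> \bigcap_(l in [set: I]) (Y l @^-1` F l) = setT.
Proof. by move=> h; apply/seteqP; split => // w _ l _; rewrite h. Qed.

Definition good d (Omega : measurableType d) (P : probability Omega R) n (X : 'I_n -> Omega -> E) :=
  [/\ forall i, K_gaussian absK nE P (X i),
      forall i j B, borel nE B -> P (X i @^-1` B) = P (X j @^-1` B) &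
      indep nE P X].

Definition upd (I : finType) (F : I -> set E) (i : I) B1 (k : I) B2 :=
  fun l => if l == i then B1 else if l == k then B2 else F l.

Lemma indep_two d (Omega : measurableType d) (P : probability Omega R) (I : finType)
  (X : I -> Omega -> E) (i k : I) (B1 B2 : set E) (F : I -> set E) :
  indep nE P X -> i != k -> borel nE B1 -> borel nE B2 -> (forall l, borel nE (F l)) ->
  P ((X i @^-1` B1 `&` X k @^-1` B2) `&`
     \bigcap_(l in [set: I]) (X l @^-1` (if (l == i) || (l == k) then setT else F l))) =
  (P (X i @^-1` B1) * P (X k @^-1` B2) *
     \prod_(l | (l != i) && (l != k)) P (X l @^-1` F l))%E.
Proof.
move=> hX ik h1 h2 hF.
pose F1 := upd F i B1 k B2.
have hF1 l : borel nE (F1 l) by rewrite /F1 /upd; case: ifP => _ //; case: ifP.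
have e1 : F1 i = B1 by rewrite /F1 /upd eqxx.
have e2 : F1 k = B2 by rewrite /F1 /upd eq_sym (negbTE ik) eqxx.
have e3 : (fun l => X l @^-1` (if (l == i) || (l == k) then setT else F1 l)) =
          (fun l => X l @^-1` (if (l == i) || (l == k) then setT else F l)).
  apply: funext => l; rewrite /F1 /upd; case: (eqVneq l i) => //= _; by case: (eqVneq l k).
have h := hX F1 hF1; rewrite (cap_split X F1 i k) e1 e2 e3 in h; rewrite h.
rewrite (prod_split2 _ ik) e1 e2; congr (_ * _)%E.
apply: eq_bigr => l /andP[li lk]; by rewrite /F1 /upd (negbTE li) (negbTE lk).
Qed.

Lemma tv_good d (Omega : measurableType d) (P : probability Omega R) n
  (X : 'I_n -> Omega -> E) (i k : 'I_n) (s : K) :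
  good P X -> i != k -> absK s <= 1 ->
  good P (fun l => if l == k then (fun w => X k w + s *: X i w) else X l).
Proof.
move=> [hg hl hind] ik s1.
pose Xk := fun w => X k w + s *: X i w.
have sa := @sigma_algebra_measurable _ Omega.
have rvX l : rv nE (X l) := (hg l).1.
have rvk : rv nE Xk := rvS_add hK hE s sa (rvX k) (rvX i).
have ip : indep nE P (fun j : 'I_2 => if val j == 0%N then X i else X k).
  apply: (indep_opt (X := X) (f := fun j : 'I_2 => Some (if val j == 0%N then i else k)) hind).
    have v01 (j : 'I_2) : j = ord0 \/ j = ord_max.
      by case: j => [[|[|]]] // p; [left|right]; apply: val_inj.
    move=> j j' l; case: (v01 j) => ->; case: (v01 j') => -> /= [e1] [e2] //;
      by move: ik; rewrite e1 e2 eqxx.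
  by move=> j B hB /=; exists B; split => //; case: ifP.
have pl C : borel2 nE C ->
    P ((fun w => (X i w, Xk w)) @^-1` C) = P ((fun w => (X i w, X k w)) @^-1` C).
  move=> hC; have := (hg i).2 _ _ P (X i) (X k) (rvX i) (rvX k) ip
     (fun B _ => erefl) (fun B hB => hl k i B hB) (tmat s) (tmat_on hK s1) C hC.
  move=> <-; congr (P _); apply/seteqP; split => w /=;
    by rewrite /tmat /= scale1r scale0r addr0 scale1r addrC.
have eX (U : Omega -> E) B : (fun w => (X i w, U w)) @^-1` (setT `*` B) = U @^-1` B.
  by apply/seteqP; split => w /=; [case | split].
have lk B : borel nE B -> P (Xk @^-1` B) = P (X k @^-1` B).
  move=> hB; rewrite -!eX; apply: pl; apply: sub_gen_smallest.
  by exists setT; [exact: borelT | exists B].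
have gk : K_gaussian absK nE P Xk := kg_law (hg k) rvk lk.
split.
- by move=> l; case: ifP => _; [exact: gk | exact: (hg l)].
- move=> l l' B hB.
  have e l0 : P ((if l0 == k then Xk else X l0) @^-1` B) = P (X k @^-1` B).
    by case: ifP => _; [apply: lk | apply: hl].
  by rewrite !e.
move=> B hB.
pose R0 := \bigcap_(l in [set: 'I_n]) (X l @^-1` (if (l == i) || (l == k) then setT else B l)).
have mR0 : measurable R0.
  apply: fin_bigcap_measurable; first exact: finite_finset.
  move=> l _; apply: rvX; case: ifP => _; [exact: borelT | exact: hB].
have pIk B1 B2 : borel nE B1 -> borel nE B2 ->
    P (X i @^-1` B1 `&` X k @^-1` B2) = (P (X i @^-1` B1) * P (X k @^-1` B2))%E.
  move=> h1 h2; have := indep_two (B1:=B1) (B2:=B2) (F:=fun _ => setT) hind ik h1 h2 (fun _ => @borelT _ _ _ nE).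
  rewrite cap_setT; last by move=> l; case: ifP.
  rewrite setIT => ->; rewrite big1 ?mule1 // => l _.
  by rewrite preimage_setT probability_setT.
have pR0 : P R0 = (\prod_(l | (l != i) && (l != k)) P (X l @^-1` B l))%E.
  have := indep_two (B1:=setT) (B2:=setT) (F:=B) hind ik (@borelT _ _ _ nE) (@borelT _ _ _ nE) hB.
  by rewrite !preimage_setT setIid setTI probability_setT !mul1e.
pose pi := [set X i @^-1` B1 `&` X k @^-1` B2 | B1 in borel nE & B2 in borel nE].
have hpi B1 B2 : borel nE B1 -> borel nE B2 ->
    P ((X i @^-1` B1 `&` X k @^-1` B2) `&` R0) = (P (X i @^-1` B1 `&` X k @^-1` B2) * P R0)%E.
  move=> h1 h2; rewrite /R0 (indep_two (B1:=B1) (B2:=B2) (F:=B) hind ik h1 h2 hB) -/R0 pR0 pIk //.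
have fR0 : P R0 \is a fin_num.
  by rewrite ge0_fin_numE ?measure_ge0 // (le_lt_trans (probability_le1 P mR0)) ?ltey.
pose r := NngNum (fine_ge0 (measure_ge0 P R0)).
have er : ((r%:num)%:E = P R0)%E by rewrite /= fineK.
have Gm : pi `<=` measurable.
  by move=> _ [B1 h1 [B2 h2 <-]]; apply: measurableI; [apply: rvX | apply: rvX].
have Gg : forall q : nat, pi setT.
  move=> q; exists setT; first exact: borelT.
  by exists setT; [exact: borelT | rewrite !preimage_setT setIT].
have gc : \bigcup_(q : nat) (fun _ => setT) q = [set: Omega].
  by apply/seteqP; split => // w _; exists 0%N.
have sI : setI_closed pi.
  move=> _ _ [B1 h1 [B2 h2 <-]] [B1' h1' [B2' h2' <-]].
  exists (B1 `&` B1'); first exact: (saI (@borel_sa _ _ _ nE)).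
  exists (B2 `&` B2'); first exact: (saI (@borel_sa _ _ _ nE)).
  by rewrite !preimage_setI setIACA.
have m12 : forall A, pi A -> mrestr P mR0 A = mscale r P A.
  move=> _ [B1 h1 [B2 h2 <-]].
  change (P ((X i @^-1` B1 `&` X k @^-1` B2) `&` R0) = ((r%:num)%:E * P (X i @^-1` B1 `&` X k @^-1` B2))%E).
  by rewrite er hpi // muleC.
have moo : forall q : nat, (mrestr P mR0 ((fun _ => setT) q) < +oo)%E.
  move=> q; change (P (setT `&` R0) < +oo)%E; rewrite setTI.
  by apply: le_lt_trans (probability_le1 P mR0) _; rewrite ltey.
have hS A : <<s pi>> A -> P (A `&` R0) = (P A * P R0)%E.
  move=> hA; have := g_sigma_algebra_measure_unique pi Gm (fun _ => setT) Gg gc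
     (mrestr P mR0) (mscale r P) sI m12 moo A hA.
  move=> h; have h' : P (A `&` R0) = ((r%:num)%:E * P A)%E := h.
  by rewrite h' er muleC.
have spi : sigma_algebra setT <<s pi>> := smallest_sigma_algebra setT pi.
have rXi : rvS nE <<s pi>> (X i).
  move=> B1 h1; apply: sub_gen_smallest; exists B1 => //.
  by exists setT; [exact: borelT | rewrite preimage_setT setIT].
have rXk : rvS nE <<s pi>> (X k).
  move=> B1 h1; apply: sub_gen_smallest; exists setT; first exact: borelT.
  by exists B1 => //; rewrite preimage_setT setTI.
have rXk' : rvS nE <<s pi>> Xk := rvS_add hK hE s spi rXk rXi.
have hA : <<s pi>> (X i @^-1` B i `&` Xk @^-1` B k).
  exact: (saI spi (rXi _ (hB i)) (rXk' _ (hB k))).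
rewrite (cap_split _ _ i k) (negbTE ik) eqxx.
have -> : \bigcap_(l in [set: 'I_n])
    ((if l == k then Xk else X l) @^-1` (if (l == i) || (l == k) then setT else B l)) = R0.
  rewrite /R0; congr (bigcap _ _); apply: funext => l /=.
  case: (eqVneq l k) => [->|lk0] /=; first by rewrite orbT !preimage_setT.
  by [].
rewrite hS // (prod_split2 _ ik) (negbTE ik) eqxx lk // pR0.
have -> : P (X i @^-1` B i `&` Xk @^-1` B k) = P (X i @^-1` B i `&` X k @^-1` B k).
  apply: (pl (B i `*` B k)); apply: sub_gen_smallest; exists (B i) => //; exists (B k) => //.
rewrite pIk //; congr (_ * _)%E.
by apply: eq_bigr => l /andP[_ lk0]; rewrite (negbTE lk0).
Qed.

End TV2.
Section Final.
Context (R : realType) (K : fieldType) (absK : K -> R) (hK : nonarch_abs absK)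
  (E : lmodType K) (nE : E -> R) (hE : sep_banach absK nE).

Lemma sum_split2 (I : finType) (F : I -> E) (i k : I) : i != k ->
  \sum_(l : I) F l = F i + F k + \sum_(l | (l != i) && (l != k)) F l.
Proof.
move=> ik; rewrite (bigD1 i) // (bigD1 k) /=; last by rewrite eq_sym.
rewrite addrA; congr (_ + _); apply: eq_bigl => l; by rewrite andTb.
Qed.

Lemma sum_tv n (l k : 'I_n) (r : K) (b : 'I_n -> K) (Y : 'I_n -> E) : l != k ->
  \sum_i b i *: Y i =
  \sum_i (tv l k r b) i *: (if i == k then Y k + r *: Y l else Y i).
Proof.
move=> lk; rewrite !(sum_split2 _ lk) /tv eqxx (negbTE lk) eq_sym (negbTE lk) eqxx.
have -> : \sum_(i | (i != l) && (i != k))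
    (if i == l then b l - r * b k else b i) *: (if i == k then Y k + r *: Y l else Y i)
    = \sum_(i | (i != l) && (i != k)) b i *: Y i.
  by apply: eq_bigr => i /andP[il ik]; rewrite (negbTE il) (negbTE ik).
congr (_ + _).
rewrite scalerBl scalerDr scalerA (mulrC (b k)).
by rewrite addrACA addNr addr0.
Qed.

Lemma realize d (Omega : measurableType d) (P : probability Omega R) n
    (T : ('I_n -> K) -> ('I_n -> K)) :
  gen absK T -> forall X : 'I_n -> Omega -> E, good absK nE P X ->
  exists X', good absK nE P X' /\
    forall a w, \sum_i a i *: X i w = \sum_i (T a) i *: X' i w.
Proof.
elim=> [|T' l k r gT IH lk r1] X gX; first by exists X.
have [X' [gX' hX']] := IH X gX.
exists (fun l0 => if l0 == k then (fun w => X' k w + r *: X' l w) else X' l0).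
split; first exact: tv_good.
move=> a w; rewrite hX' (sum_tv r _ (fun i => X' i w) lk).
by apply: eq_bigr => i _ /=; case: ifP.
Qed.

End Final.
Unset Implicit Arguments.
Set Strict Implicit.

Theorem theorem4p11 (R : realType) (K : fieldType) (absK : K -> R)
  (E : lmodType K) (nE : E -> R)
  (hK : local_field absK) (hE : sep_banach absK nE)
  (d : measure_display) (Omega : measurableType d) (P : probability Omega R)
  (n m : nat) (X : 'I_n -> Omega -> E)
  (hXg : forall i, K_gaussian absK nE P (X i))
  (hXid : forall i j B, borel nE B -> P (X i @^-1` B) = P (X j @^-1` B))
  (hXind : indep nE P X)
  (alpha : 'I_m -> 'I_n -> K) (halpha : K_orthogonal absK alpha) :
  let Y : 'I_m -> Omega -> E :=
    fun j w => \sum_(i < n) alpha j i *: X i w in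
  (forall j, K_gaussian absK nE P (Y j)) /\ indep nE P Y.
Proof.
move=> Y.
have hK' : nonarch_abs absK by case: hK.
have [T [gT [s [c [hsh hc hinj]]]]] := reduce hK' halpha.
have gX : good absK nE P X by split.
have [X' [[gX' _ iX'] hrep]] := realize hK' hE gT gX.
have hY j : Y j = match s j with
    | Some k => (fun w => c j *: X' k w) | None => (fun _ => 0) end.
  apply: funext => w; rewrite /Y (hrep (alpha j) w) hsh.
  case: (s j) => [k|]; last by rewrite big1 // => i _; rewrite scale0r.
  rewrite (bigD1 k) //= /e_vec eqxx big1 ?addr0 // => i ik.
  by rewrite (negbTE ik) scale0r.
split.
  move=> j; rewrite hY; case E0: (s j) => [k|]; last exact: kg_zero.
  apply: (kg_scale hK' hE); [exact: (hc j k E0) | exact: gX'].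
apply: (indep_opt (X := X') (f := s) iX' hinj) => j B hB.
rewrite hY; case: (s j) => [k|].
  by exists ((fun x => c j *: x) @^-1` B); split; [exact: (borel_scale hK' hE)|].
case: (pselect (B 0)) => h; [left|right]; apply/seteqP; split => // w //=.
Qed.
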